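(* Let $\Sigma$ be a rational fan and $f\in\mathrm{PL}(\Sigma)$. Then $[e^f]=1$ in $\underline{\mathrm{PE}}(\Sigma)$ if and only if $f\in\mathrm{L}(\Sigma)$.
   Context: $N$ is a free abelian group of rank $n$, $N_\mathbb{R}=N\otimes_\mathbb{Z}\mathbb{R}$, $M=\mathrm{Hom}_\mathbb{Z}(N,\mathbb{Z})$; elements of $M$ are viewed as integral linear functions $N_\mathbb{R}\to\mathbb{R}$. A rational fan is a finite collection of rational polyhedral cones in $N_\mathbb{R}$, closed under faces, with pairwise intersections faces of both; $|\Sigma|$ is its support. $\mathrm{PL}(\Sigma)$ is the group of functions $f:|\Sigma|\to\mathbb{R}$ such that for every cone $\sigma\in\Sigma$ there is $m\in M$ with $f|_\sigma=m|_\sigma$; $\mathrm{L}(\Sigma)\subseteq\mathrm{PL}(\Sigma)$ is the subgroup of restrictions $m|_{|\Sigma|}$, $m\in M$. $\mathrm{PE}(\Sigma)$ is the subring of the ring of real-valued functions on $|\Sigma|$ generated by the $e^f$, $f\in\mathrm{PL}(\Sigma)$, and $\underline{\mathrm{PE}}(\Sigma)=\mathrm{PE}(\Sigma)/\langle e^\ell-1\mid \ell\in\mathrm{L}(\Sigma)\rangle$. *)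

(* Defs.v *)
From Stdlib Require List.
From mathcomp Require Import all_boot all_order all_algebra.
From mathcomp Require Import all_classical all_reals all_analysis.
Set Implicit Arguments. Unset Strict Implicit. Unset Printing Implicit Defensive.
Import Order.TTheory GRing.Theory Num.Theory.
Local Open Scope ring_scope.
Local Open Scope classical_set_scope.

Section Fans.
Variables (R : realType) (n : nat).

(* N = Z^n, N_R = R^n (row vectors), M = Z^n acting by the standard pairing. *)
Definition pairM (m : 'rV[int]_n) (x : 'rV[R]_n) : R :=
  \sum_(i < n) (m ord0 i)%:~R * x ord0 i.

Definition pairR (u : 'rV[R]_n) (x : 'rV[R]_n) : R :=
  \sum_(i < n) u ord0 i * x ord0 i.

Definition cone_gen (gens : seq 'rV[int]_n) : set 'rV[R]_n :=
  [set x | exists c : 'rV[int]_n -> R,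
     (forall v, 0 <= c v) /\
     x = \sum_(v <- gens) c v *: map_mx (fun z : int => z%:~R) v].

Definition rational_cone (s : set 'rV[R]_n) : Prop :=
  exists gens, s = cone_gen gens.

Definition is_face (t s : set 'rV[R]_n) : Prop :=
  exists u : 'rV[R]_n, (forall x, s x -> 0 <= pairR u x) /\
    t = s `&` [set x | pairR u x = 0].

Definition is_fan (F : seq (set 'rV[R]_n)) : Prop :=
  [/\ forall s, Stdlib.Lists.List.In s F -> rational_cone s,
      forall s t, Stdlib.Lists.List.In s F -> is_face t s -> Stdlib.Lists.List.In t F &
      forall s t, Stdlib.Lists.List.In s F -> Stdlib.Lists.List.In t F ->
        is_face (s `&` t) s /\ is_face (s `&` t) t].

Definition support (F : seq (set 'rV[R]_n)) : set 'rV[R]_n :=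
  [set x | exists s, Stdlib.Lists.List.In s F /\ s x].

(* Functions |F| -> R are represented by functions R^n -> R; only their
   values on |F| matter (all predicates below are invariant under change
   off |F|). *)
Definition PL (F : seq (set 'rV[R]_n)) (f : 'rV[R]_n -> R) : Prop :=
  forall s, Stdlib.Lists.List.In s F -> exists m : 'rV[int]_n, forall x, s x -> f x = pairM m x.

Definition Lin (F : seq (set 'rV[R]_n)) (f : 'rV[R]_n -> R) : Prop :=
  exists m : 'rV[int]_n, forall x, support F x -> f x = pairM m x.

Inductive PE (F : seq (set 'rV[R]_n)) : ('rV[R]_n -> R) -> Prop :=
  | PE_exp f : PL F f -> PE F (fun x => expR (f x))
  | PE_one : PE F (fun _ => 1)
  | PE_add g h : PE F g -> PE F h -> PE F (fun x => g x + h x)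
  | PE_opp g : PE F g -> PE F (fun x => - g x)
  | PE_mul g h : PE F g -> PE F h -> PE F (fun x => g x * h x)
  | PE_ext g h : PE F g -> (forall x, support F x -> g x = h x) -> PE F h.

Inductive PE_ideal (F : seq (set 'rV[R]_n)) : ('rV[R]_n -> R) -> Prop :=
  | I_gen l : Lin F l -> PE_ideal F (fun x => expR (l x) - 1)
  | I_zero : PE_ideal F (fun _ => 0)
  | I_add g h : PE_ideal F g -> PE_ideal F h -> PE_ideal F (fun x => g x + h x)
  | I_mul a g : PE F a -> PE_ideal F g -> PE_ideal F (fun x => a x * g x)
  | I_ext g h : PE_ideal F g -> (forall x, support F x -> g x = h x) ->
                PE_ideal F h.

(* [g] = [h] in the quotient PE(F)/I *)
Definition PEbar_eq (F : seq (set 'rV[R]_n)) (g h : 'rV[R]_n -> R) : Prop :=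
  PE_ideal F (fun x => g x - h x).

End Fans.

(* Main.v *)
Require Import Defs.
From mathcomp Require Import all_boot all_order all_algebra.
From mathcomp Require Import all_classical all_reals all_analysis.
From mathcomp Require Import ring lra.
Set Implicit Arguments. Unset Strict Implicit. Unset Printing Implicit Defensive.
Import Order.TTheory GRing.Theory Num.Theory.
Local Open Scope ring_scope.

Section Real.
Variable R : realType.

Lemma expbound (y : R) : `|y| <= 1/2 -> `|expR y - 1 - y| <= 2 * y^+2.
Proof.
move=> hy.
have h1 := expR_ge1Dx y. have h2 := expR_ge1Dx (- y).
have h3 := expRxMexpNx_1 y. have h4 := expR_gt0 y. have h5 := expR_gt0 (- y).
set E := expR y in h1 h3 h4 *. set En := expR (- y) in h2 h3 h5.
have hE : E - 1 - y >= 0 by lra.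
rewrite ger0_norm //.
case: (lerP 0 y) => hy0.
- rewrite ger0_norm // in hy.
  have hE2 : E <= 2 by nra.
  have : E - 1 <= y * E by nra.
  nra.
- rewrite ltr0_norm // in hy.
  have : E * (1 - y) <= 1 by nra.
  nra.
Qed.

Lemma norm_le_sum (s : seq (R * R)) p : p \in s -> `|p.2| <= \sum_(q <- s) `|q.2|.
Proof.
elim: s => // q s IH; rewrite in_cons big_cons => /orP [/eqP -> | /IH h].
  by rewrite lerDl sumr_ge0.
by rewrite (le_trans h) // lerDr.
Qed.

Lemma key (s : seq (R * R)) :
  (forall t, 0 <= t -> \sum_(p <- s) p.1 * expR (t * p.2) = 0) ->
  \sum_(p <- s) p.1 * p.2 = 0.
Proof.
move=> H.
have H0 : \sum_(p <- s) p.1 = 0.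
  have := H 0 (lexx _); under eq_bigr do rewrite mul0r expR0 mulr1; done.
set S := \sum_(p <- s) p.1 * p.2.
set A := \sum_(p <- s) `|p.2|.
set K := \sum_(p <- s) `|p.1| * p.2 ^+ 2.
have A0 : 0 <= A by rewrite sumr_ge0.
have K0 : 0 <= K by rewrite sumr_ge0 // => p _; rewrite mulr_ge0 // sqr_ge0.
have bnd : forall t, 0 < t -> t * (2 * (A + 1)) <= 1 -> `|t * S| <= 2 * t ^+ 2 * K.
  move=> t t0 tA.
  have E : t * S = - \sum_(p <- s) p.1 * (expR (t * p.2) - 1 - t * p.2).
    have -> : \sum_(p <- s) p.1 * (expR (t * p.2) - 1 - t * p.2) =
       \sum_(p <- s) p.1 * expR (t * p.2) - \sum_(p <- s) p.1 - t * S.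
      rewrite /S mulr_sumr -!sumrB; apply: eq_bigr => p _; ring.
    rewrite H ?ltW // H0; ring.
  rewrite E normrN (le_trans (ler_norm_sum _ _ _)) // /K mulr_sumr big_seq [X in _ <= X]big_seq.
  apply: ler_sum => p ps; rewrite normrM.
  have hp : `|t * p.2| <= 1/2.
    have := norm_le_sum ps; rewrite -/A normrM (gtr0_norm t0) => hA.
    have : t * `|p.2| <= t * A by rewrite ler_pM2l.
    have : 0 <= `|p.2| by [].
    nra.
  have := expbound hp.
  have : 0 <= `|p.1| by [].
  move=> c0 hb.
  have -> : 2 * t ^+ 2 * (`|p.1| * p.2 ^+ 2) = `|p.1| * (2 * (t * p.2) ^+ 2) by ring.
  by apply: ler_wpM2l.
  apply/eqP; apply: contraT => /negPf nS.
  have Sp : 0 < `|S| by rewrite normr_gt0 nS.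
  pose t1 := 1 / (2 * (A + 1)).
  pose t2 := `|S| / (4 * K + 1).
  pose t := Num.min t1 t2.
  have t1p : 0 < t1 by rewrite divr_gt0 //; lra.
  have t2p : 0 < t2 by rewrite divr_gt0 //; lra.
  have tp : 0 < t by rewrite lt_min t1p t2p.
  have tt1 : t <= t1 by rewrite ge_min lexx.
  have tt2 : t <= t2 by rewrite ge_min lexx orbT.
  have h1 : t * (2 * (A + 1)) <= 1.
    by rewrite -ler_pdivlMr; [exact: tt1 | lra].
  have h2 : t * (4 * K + 1) <= `|S|.
    by rewrite -ler_pdivlMr; [exact: tt2 | lra].
  have := bnd t tp h1.
  rewrite normrM (gtr0_norm tp) => h3.
  have h4 : `|S| <= 2 * t * K.
    have e : t * (`|S| - 2 * t * K) = t * `|S| - 2 * t ^+ 2 * K by ring.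
    have : t * (`|S| - 2 * t * K) <= 0 by rewrite e; lra.
    by rewrite pmulr_rle0 // subr_le0.
  nra.
Qed.
End Real.

Section Fan.
Variables (R : realType) (n : nat).
Local Notation V := 'rV[R]_n.
Local Open Scope classical_set_scope.

Lemma pairM_scale (m : 'rV[int]_n) t (x : V) : pairM m (t *: x) = t * pairM m x.
Proof. rewrite /pairM mulr_sumr; apply: eq_bigr => i _; rewrite mxE; ring. Qed.

Lemma pairM_add (m1 m2 : 'rV[int]_n) (x : V) :
  pairM (m1 + m2) x = pairM m1 x + pairM m2 x.
Proof. rewrite /pairM -big_split; apply: eq_bigr => i _; by rewrite mxE intrD mulrDl. Qed.

Lemma pairM0 (x : V) : pairM 0 x = 0.
Proof. rewrite /pairM big1 // => i _; rewrite mxE mul0r. done. Qed.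

Lemma pairM_int (k : int) (m : 'rV[int]_n) (x : V) :
  pairM (k *: m) x = k%:~R * pairM m x.
Proof. rewrite /pairM mulr_sumr; apply: eq_bigr => i _; rewrite mxE intrM; ring. Qed.

Lemma cone_scale (s : set V) x t : rational_cone s -> s x -> 0 <= t -> s (t *: x).
Proof.
move=> [gens ->] [c [c0 ->]] t0.
exists (fun v => t * c v); split; first by move=> v; rewrite mulr_ge0.
by rewrite scaler_sumr; apply: eq_bigr => v _; rewrite scalerA.
Qed.

Variable F : seq (set V).
Hypothesis hF : is_fan F.

Lemma support_scale x t : Defs.support F x -> 0 <= t -> Defs.support F (t *: x).
Proof.
case: hF => hc _ _ [s [sF sx]] t0; exists s; split => //; exact: cone_scale (hc _ sF) sx t0.
Qed.

Lemma PL_scale f x t : PL F f -> Defs.support F x -> 0 <= t -> f (t *: x) = t * f x.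
Proof.
case: hF => hc _ _ hf [s [sF sx]] t0.
have [m hm] := hf s sF.
by rewrite !hm ?pairM_scale //; apply: cone_scale => //; apply: hc.
Qed.

Lemma PL_add f g : PL F f -> PL F g -> PL F (fun x => f x + g x).
Proof.
move=> hf hg s sF; have [m1 h1] := hf s sF; have [m2 h2] := hg s sF.
by exists (m1 + m2) => x sx; rewrite pairM_add h1 ?h2.
Qed.

Lemma PL0 : PL F (fun _ => 0).
Proof. by move=> s sF; exists 0 => x _; rewrite pairM0. Qed.

Lemma Lin_PL f : Lin F f -> PL F f.
Proof. move=> [m hm] s sF; exists m => x sx; apply: hm; by exists s. Qed.

Lemma Lin_ext f g : Lin F f -> (forall x, Defs.support F x -> f x = g x) -> Lin F g.
Proof. move=> [m hm] e; exists m => x sx; by rewrite -e ?hm. Qed.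

Lemma Lin_add f g : Lin F f -> Lin F g -> Lin F (fun x => f x + g x).
Proof. move=> [m1 h1] [m2 h2]; exists (m1 + m2) => x sx; by rewrite pairM_add h1 ?h2. Qed.

Lemma Lin_int (k : int) f : Lin F f -> Lin F (fun x => k%:~R * f x).
Proof. move=> [m h]; exists (k *: m) => x sx; by rewrite pairM_int h. Qed.

Lemma Lin0 : Lin F (fun _ => 0).
Proof. by exists 0 => x _; rewrite pairM0. Qed.

Definition P := (int * (V -> R))%type.
Fixpoint allPL (L : seq P) : Prop :=
  match L with [::] => True | p :: L => PL F p.2 /\ allPL L end.
Definition ev (L : seq P) x := \sum_(p <- L) (p.1)%:~R * expR (p.2 x).
Definition Dv (L : seq P) x := \sum_(p <- L) (p.1)%:~R * p.2 x.
Definition c0 (L : seq P) := \sum_(p <- L) p.1.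
Definition negL (L : seq P) : seq P := map (fun p => (- p.1, p.2)) L.
Definition mulL (L1 L2 : seq P) : seq P :=
  [seq (p.1 * q.1, fun x => p.2 x + q.2 x) | p <- L1, q <- L2].
Definition rep g L := allPL L /\ forall x, Defs.support F x -> g x = ev L x.

Lemma allPL_cat L1 L2 : allPL L1 -> allPL L2 -> allPL (L1 ++ L2).
Proof. by elim: L1 => //= p L IH [h1 h2] h; split => //; apply: IH. Qed.

Lemma allPL_neg L : allPL L -> allPL (negL L).
Proof. by elim: L => //= p L IH [h1 h2]; split => //; apply: IH. Qed.

Lemma allPL_mul L1 L2 : allPL L1 -> allPL L2 -> allPL (mulL L1 L2).
Proof.
move=> a1 a2; elim: L1 a1 => //= p L IH [h1 h2]; rewrite /mulL allpairs_cons.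
apply: allPL_cat; last exact: IH.
elim: L2 a2 {IH} => //= q L2 IH2 [k1 k2]; split; [exact: PL_add | exact: IH2].
Qed.

Lemma ev_cat L1 L2 x : ev (L1 ++ L2) x = ev L1 x + ev L2 x.
Proof. by rewrite /ev big_cat. Qed.
Lemma Dv_cat L1 L2 x : Dv (L1 ++ L2) x = Dv L1 x + Dv L2 x.
Proof. by rewrite /Dv big_cat. Qed.
Lemma ev_neg L x : ev (negL L) x = - ev L x.
Proof. rewrite /ev big_map -sumrN; apply: eq_bigr => p _ /=; rewrite intrN mulNr. done. Qed.
Lemma Dv_neg L x : Dv (negL L) x = - Dv L x.
Proof. rewrite /Dv big_map -sumrN; apply: eq_bigr => p _ /=; rewrite intrN mulNr. done. Qed.
Lemma ev_mul L1 L2 x : ev (mulL L1 L2) x = ev L1 x * ev L2 x.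
Proof.
rewrite /ev /mulL big_allpairs_dep mulr_suml; apply: eq_bigr => p _.
rewrite mulr_sumr; apply: eq_bigr => q _ /=; rewrite intrM expRD; ring.
Qed.
Lemma c0_mul L1 L2 : c0 (mulL L1 L2) = c0 L1 * c0 L2.
Proof.
rewrite /c0 /mulL big_allpairs_dep mulr_suml; apply: eq_bigr => p _.
by rewrite mulr_sumr.
Qed.
Lemma Dv_mul L1 L2 x :
  Dv (mulL L1 L2) x = (c0 L2)%:~R * Dv L1 x + (c0 L1)%:~R * Dv L2 x.
Proof.
rewrite /Dv /mulL big_allpairs_dep.
transitivity (\sum_(p <- L1) ((p.1)%:~R * p.2 x * (c0 L2)%:~R + (p.1)%:~R * Dv L2 x)).
  apply: eq_bigr => p _; rewrite /c0 /Dv rmorph_sum !mulr_sumr -big_split.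
  by apply: eq_bigr => q _ /=; rewrite intrM; ring.
rewrite big_split /= -!mulr_suml /c0 /Dv !rmorph_sum /=; ring.
Qed.

Lemma PE_rep g : PE F g -> exists L, rep g L.
Proof.
elim => {g}.
- move=> f hf; exists [:: (1, f)]; split => //= x _.
  by rewrite /ev big_cons big_nil /= mul1r addr0.
- exists [:: (1, fun _ => 0)]; split => //=; first by split => //; exact: PL0.
  by move=> x _; rewrite /ev big_cons big_nil /= mul1r expR0 addr0.
- move=> g h _ [L1 [a1 e1]] _ [L2 [a2 e2]]; exists (L1 ++ L2); split.
    exact: allPL_cat.
  by move=> x sx; rewrite ev_cat e1 ?e2.
- move=> g _ [L [a e]]; exists (negL L); split; first exact: allPL_neg.
  by move=> x sx; rewrite ev_neg e.
- move=> g h _ [L1 [a1 e1]] _ [L2 [a2 e2]]; exists (mulL L1 L2); split.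
    exact: allPL_mul.
  by move=> x sx; rewrite ev_mul e1 ?e2.
- move=> g h _ [L [a e]] eh; exists L; split => // x sx; by rewrite -eh ?e.
Qed.

Definition L0 (f : V -> R) : seq P := [:: (1, f); (-1, fun _ => 0)].

Lemma L0_rep f : PL F f -> rep (fun x => expR (f x) - 1) (L0 f).
Proof.
move=> hf; split; first by split => //; split => //; exact: PL0.
move=> x _; rewrite /ev !big_cons big_nil /= expR0; ring.
Qed.

Lemma ideal_inv g : PE_ideal F g ->
  exists L, [/\ rep g L, c0 L = 0 & Lin F (Dv L)].
Proof.
elim => {g}.
- move=> l hl; exists (L0 l); split; first exact/L0_rep/Lin_PL.
    by rewrite /c0 !big_cons big_nil.
  apply: Lin_ext hl _ => x _; rewrite /Dv !big_cons big_nil /=; ring.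
- exists [::]; split.
  + by split => // x _; rewrite /ev big_nil.
  + by rewrite /c0 big_nil.
  + by apply: Lin_ext Lin0 _ => x _; rewrite /Dv big_nil.
- move=> g h _ [L1 [[a1 e1] z1 l1]] _ [L2 [[a2 e2] z2 l2]]; exists (L1 ++ L2); split.
  + split; first exact: allPL_cat.
    by move=> x sx; rewrite ev_cat e1 ?e2.
  + by rewrite /c0 big_cat /= -/(c0 L1) -/(c0 L2) z1 z2.
  + by apply: Lin_ext (Lin_add l1 l2) _ => x _; rewrite Dv_cat.
- move=> a g ha _ [L2 [[a2 e2] z2 l2]].
  have [L1 [a1 e1]] := PE_rep ha.
  exists (mulL L1 L2); split.
  + split; first exact: allPL_mul.
    by move=> x sx; rewrite ev_mul e1 ?e2.
  + by rewrite c0_mul z2 mulr0.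
  + apply: Lin_ext (Lin_int (c0 L1) l2) _ => x _.
    by rewrite Dv_mul z2 mul0r add0r.
- move=> g h _ [L [[a e] z l]] eh; exists L; split => //; split => // x sx.
  by rewrite -eh ?e.
Qed.

Lemma ev_scale L x t : allPL L -> Defs.support F x -> 0 <= t ->
  ev L (t *: x) = \sum_(p <- L) (p.1)%:~R * expR (t * p.2 x).
Proof.
move=> aL sx t0; elim: L aL => [|p L IH] /=; first by rewrite /ev !big_nil.
move=> [h1 h2]; rewrite /ev !big_cons (PL_scale h1 sx t0); congr (_ + _).
exact: IH.
Qed.

Lemma uniq_D L : allPL L -> (forall x, Defs.support F x -> ev L x = 0) ->
  forall x, Defs.support F x -> Dv L x = 0.
Proof.
move=> aL h0 x sx.
have := @key R (map (fun p : P => ((p.1)%:~R, p.2 x)) L).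
rewrite big_map /= => k; rewrite /Dv k // => t t0.
rewrite big_map /= -(ev_scale aL sx t0); apply: h0; exact: support_scale.
Qed.

End Fan.

Theorem lemma2 (R : realType) (n : nat) (F : seq (set 'rV[R]_n))
  (hF : is_fan F) (f : 'rV[R]_n -> R) (hf : PL F f) :
  PEbar_eq F (fun x => expR (f x)) (fun _ => 1) <-> Lin F f.
Proof.
split; last by move=> hl; exact: (I_gen hl).
move=> H; have [L [[aL eL] _ lL]] := ideal_inv H.
have [a0 e0] := L0_rep hf.
pose Ld := L ++ negL (L0 f).
have hd := @uniq_D R n F hF Ld (allPL_cat aL (allPL_neg a0)).
apply: Lin_ext lL _ => x sx.
have h0 : forall y, Defs.support F y -> ev Ld y = 0.
  by move=> y sy; rewrite ev_cat ev_neg -eL // -e0 // subrr.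
move: (hd h0 x sx); rewrite Dv_cat Dv_neg => /eqP.
rewrite subr_eq0 => /eqP ->; rewrite /Dv !big_cons big_nil /=; ring.
Qed.
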